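(* Assume $\mu_*<1$. Then the probability measure $\wp$ on $\Omega_+$ is continuous, i.e. $\wp(\{\widehat\zeta^{(0)}\})=0$ for every point $\widehat\zeta^{(0)}\in\Omega_+$.
   Context: Model. Fix $d\ge1$. $(X_t,\xi_t)_{t\in\mathbb{Z}_+}$ is a Markov chain with $X_t\in\mathbb{Z}^d$, $X_0=0$, $\xi_t\in\Omega:=\{-1,+1\}^{\mathbb{Z}^d}$. Given $X_t=x,\xi_t=\bar\xi$, the next position and the next environment are conditionally independent; $P(X_{t+1}=x+u\mid X_t=x,\xi_t=\bar\xi)=P_0(u)+\epsilon c(u)\bar\xi(x)$, where $\epsilon>0$, $P_0$ is an even, finite-range probability distribution on $\mathbb{Z}^d$ with $|\sum_u P_0(u)e^{i(\lambda,u)}|=1$ iff $\lambda=0$ and such that $1/\tilde p_0(\lambda)$ (with $\tilde p_0(\lambda)=\sum_u P_0(u)e^{i(\lambda,u)}$) has absolutely summable Fourier coefficients, and $c$ is an odd finite-range real function with $P_0(u)\pm\epsilon c(u)\in[0,1)$. Given $X_t=x,\xi_t=\bar\xi$, the values $\xi_{t+1}(y)$, $y\in\mathbb{Z}^d$, are independent with $P(\xi_{t+1}(y)=s)=Q_0(\bar\xi(y),s)$ if $y\ne x$ and $Q_1(\bar\xi(y),s)$ if $y=x$, where $Q_0,Q_1$ are symmetric $2\times2$ stochastic matrices, $Q_0$ has eigenvalues $1,\mu$ with $0<|\mu|<1$, and $Q_1-Q_0=O(\epsilon)$. The environment seen from the walk, $\eta_t(x)=\xi_t(X_t+x)$, is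 a Markov chain on $\Omega$ with stochastic operator $(\mathcal T f)(\bar\eta)=\mathcal E[f(\eta_{t+1})\mid\eta_t=\bar\eta]$. $\Pi_0$ is the product of uniform measures on $\{\pm1\}$. For finite $\Gamma\subset\mathbb{Z}^d$ let $\Phi_\Gamma(\eta)=\prod_{x\in\Gamma}\eta(x)$, $\Phi_\emptyset=1$; each $f\in L^2(\Omega,\Pi_0)$ is written $f=\sum_\Gamma f_\Gamma\Phi_\Gamma$. For a fixed $M>1$, $\mathcal H_M=\{f:\|f\|_M:=\sum_\Gamma|f_\Gamma|M^{|\Gamma|}<\infty\}$. Standing assumptions (valid for $\epsilon,|\mu|$ small): $\mathcal T$ maps $\mathcal H_M$ into itself; the chain $(\eta_t)$ has an invariant probability measure $\Pi$, absolutely continuous w.r.t. $\Pi_0$ with bounded density; there is $\bar\mu\in(0,1)$ with $\|\mathcal T f\|_M\le\bar\mu\|f\|_M$ for all $f\in\widehat{\mathcal H}_M:=\{f\in\mathcal H_M:\int f\,d\Pi=0\}$. The dynamics and $\Pi$ are invariant under the global spin flip $\eta\mapsto-\eta$. Path space notation: $\mathcal P_\Pi$ is the law of $(\eta_t)_{t\ge0}$ with $\eta_0\sim\Pi$. $\zeta_t:=\eta_t(0)$, $\widehat\zeta=(\zeta_t)_{t\ge0}\in\Omega_+:=\{\pm1\}^{\mathbb{Z}_+}$, and $\wp$ is the law of $\widehat\zeta$ under $\mathcal P_\Pi$ (a probability on $\Omega_+$ with its cylinder $\sigma$-algebra). $\mu_*:=M\sqrt{\bar\mu(1+2\bar\mu)}$.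 *)

(* Defs.v *)
From HB Require Import structures.
From mathcomp Require Import all_boot all_order all_algebra.
From mathcomp Require Import finmap.
From mathcomp Require Import all_classical all_reals all_analysis.
Set Implicit Arguments. Unset Strict Implicit. Unset Printing Implicit Defensive.
Import Order.TTheory GRing.Theory Num.Theory.
Local Open Scope classical_set_scope.
Local Open Scope ring_scope.

Definition Site (d : nat) := 'rV[int]_d.

Definition spin {R : pzRingType} (b : bool) : R := if b then 1 else -1.

Definition sidx (b : bool) : 'I_2 := if b then ord_max else ord0.

Definition coord_sets (d : nat) : set (set (Site d -> bool)) :=
  [set A | exists x b, A = [set e | e x = b]].
Definition Omega (d : nat) := @g_sigma_algebraType _ (@coord_sets d).

Definition path_sets : set (set (nat -> bool)) :=
  [set A | exists k b, A = [set z | z k = b]].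
Definition OmegaP := @g_sigma_algebraType _ path_sets.

Definition cylinder (d : nat) (L : {fset Site d}) (s : Site d -> bool)
  : set (Omega d) := [set e | forall x, x \in L -> e x = s x].

Definition Phi {R : realType} (d : nat) (G : {fset Site d}) (e : Omega d) : R :=
  \prod_(x <- G) spin (e x).

Section ModelDefs.
Variable R : realType.
Variable d : nat.

Definition dotR (l : 'rV[R]_d) (u : Site d) : R :=
  \sum_(i < d) l ord0 i * (u ord0 i)%:~R.

(* \tilde p_0(lambda) = sum_u P0(u) e^{i(lambda,u)}; P0 is even with support
   in the finite set U, so this is the real number sum_u P0(u) cos (lambda,u) *)
Definition ptilde0 (U : {fset Site d}) (P0 : Site d -> R) (l : 'rV[R]_d) : R :=
  \sum_(u <- U) P0 u * cos (dotR l u).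

Definition ssum (T : choiceType) (f : T -> R) : R :=
  fine (\esum_(x in [set: T]) (fun y => (f y)%:E)^\+ x
        - \esum_(x in [set: T]) (fun y => (f y)%:E)^\- x)%E.

(* Q_1 at the site of the walker (relative position 0), Q_0 elsewhere *)
Definition Qat (Q0 Q1 : 'M[R]_2) (y : Site d) : 'M[R]_2 :=
  if y == 0 then Q1 else Q0.

(* P(eta_{t+1}(x) = s(x) for all x in L | eta_t = e):
   the walker jumps by u with prob. P0(u) + eps c(u) e(0), and independently
   each xi_{t+1}(y) is drawn from Q_{1 or 0}(xi_t(y), .); eta_{t+1}(x) = xi_{t+1}(u+x) *)
Definition step_cyl (eps : R) (P0 c : Site d -> R) (U : {fset Site d})
  (Q0 Q1 : 'M[R]_2) (e : Omega d) (L : {fset Site d}) (s : Site d -> bool) : R :=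
  \sum_(u <- U) ((P0 u + eps * c u * spin (e 0)) *
     \prod_(x <- L) Qat Q0 Q1 (u + x) (sidx (e (u + x))) (sidx (s x))).

Definition fcoef (Pi0 : probability (Omega d) R) (f : Omega d -> R)
  (G : {fset Site d}) : R :=
  Rintegral Pi0 setT (fun e => f e * Phi G e).

Definition normM (Pi0 : probability (Omega d) R) (M : R) (f : Omega d -> R)
  : \bar R :=
  \esum_(G in [set: {fset Site d}]) (`|fcoef Pi0 f G| * M ^+ #|` G|)%:E.

Definition inHM (Pi0 : probability (Omega d) R) (M : R) (f : Omega d -> R) : Prop :=
  [/\ measurable_fun setT f,
      Pi0.-integrable setT (fun e => (f e ^+ 2)%:E) &
      (normM Pi0 M f < +oo)%E].

Definition Top (K : R.-pker (Omega d) ~> (Omega d)) (f : Omega d -> R)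
  (e : Omega d) : R :=
  Rintegral (K e) setT f.

(* finite-dimensional distributions of (zeta_t) under P_Pi:
   fdd_fun K s m k e = P(zeta_k = s k, ..., zeta_{k+m} = s (k+m) | eta_k = e) *)
Fixpoint fdd_fun (K : R.-pker (Omega d) ~> (Omega d)) (s : nat -> bool)
  (m k : nat) (e : Omega d) {struct m} : \bar R :=
  match m with
  | 0 => ((e 0 == s k)%:R)%:E
  | m'.+1 => (((e 0 == s k)%:R)%:E * \int[K e]_e' fdd_fun K s m' k.+1 e')%E
  end.

End ModelDefs.

Definition flip (d : nat) (e : Omega d) : Omega d := fun x => ~~ e x.

(* Main.v *)
Require Import Defs.
From HB Require Import structures.
From mathcomp Require Import all_boot all_order all_algebra.
From mathcomp Require Import finmap.
From mathcomp Require Import all_classical all_reals all_analysis.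
From mathcomp Require Import measurable_realfun.
From mathcomp Require Import ring lra.
Import Order.TTheory GRing.Theory Num.Theory.
Local Open Scope classical_set_scope.
Local Open Scope ring_scope.

Lemma sum2 (R : realType) (F : 'I_2 -> R) : \sum_i F i = F ord0 + F ord_max.
Proof. rewrite big_ord_recr big_ord1; congr (F _ + _); exact: val_inj. Qed.

Lemma ord2_cases (i : 'I_2) : i = ord0 \/ i = ord_max.
Proof. case: i => [[|[|i]] Hi]; [left|right|by []]; exact: val_inj. Qed.

Lemma Q_lt1 (R : realType) (Q : 'M[R]_2) (mu : R) :
  (forall i j, 0 <= Q i j) -> (forall i, \sum_j Q i j = 1) -> Q^T = Q ->
  eigenvalue Q mu -> `|mu| < 1 -> forall i j, Q i j < 1.
Proof.
move=> Q0 Qs QT /eigenvalueP [v Hv vn0] Hmu.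
have sym : Q ord_max ord0 = Q ord0 ord_max.
  by rewrite -[in LHS]QT mxE.
set b := Q ord0 ord_max.
have e00 : Q ord0 ord0 = 1 - b by have := Qs ord0; rewrite sum2 -/b; lra.
have e11 : Q ord_max ord_max = 1 - b by have := Qs ord_max; rewrite sum2 sym -/b; lra.
have b0 : 0 <= b by apply: Q0.
have b1 : b <= 1 by have := Q0 ord0 ord0; rewrite e00; lra.
set x := v ord0 ord0; set y := v ord0 ord_max.
have E0 : x * (1 - b) + y * b = mu * x.
  have /matrixP/(_ ord0 ord0) := Hv; rewrite !mxE sum2 e00 sym -/b.
  by [].
have E1 : x * b + y * (1 - b) = mu * y.
  have /matrixP/(_ ord0 ord_max) := Hv; rewrite !mxE sum2 e11 -/b.
  by [].
have xy : x != 0 \/ y != 0.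
  case: (eqVneq x 0) => hx; last by left.
  case: (eqVneq y 0) => hy; last by right.
  exfalso; move/eqP: vn0; apply; apply/matrixP => i j.
  rewrite (ord1 i) mxE; case: (ord2_cases j) => ->; done.
have mu1 : mu ^+ 2 < 1.
  have h0 := normr_ge0 mu.
  rewrite -real_normK ?num_real // expr2; nra.
have bn0 : b != 0.
  apply/eqP => hb; move: E0 E1; rewrite hb => E0 E1.
  have mu_1 : mu = 1.
    case: xy => h.
      have : (mu - 1) * x == 0 by apply/eqP; move: E0; lra.
      rewrite mulf_eq0 (negPf h) orbF subr_eq0 => /eqP //.
    have : (mu - 1) * y == 0 by apply/eqP; move: E1; lra.
    rewrite mulf_eq0 (negPf h) orbF subr_eq0 => /eqP //.
  by move: Hmu; rewrite mu_1 normr1 ltxx.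
have bn1 : b != 1.
  apply/eqP => hb; move: E0 E1; rewrite hb subrr => E0 E1.
  have ey : y = mu * x by move: E0; lra.
  have ex : x = mu * y by move: E1; lra.
  have hx : x * (1 - mu ^+ 2) = 0.
    have -> : x * (1 - mu ^+ 2) = x - mu * (mu * x) by rewrite expr2; ring.
    by rewrite -ey -ex subrr.
  have hy : y * (1 - mu ^+ 2) = 0.
    have -> : y * (1 - mu ^+ 2) = y - mu * (mu * y) by rewrite expr2; ring.
    by rewrite -ex -ey subrr.
  have : 1 - mu ^+ 2 != 0 by rewrite subr_eq0 eq_sym lt_eqF.
  move=> hm; case: xy => /negP; apply.
    by move/eqP: hx; rewrite mulf_eq0 (negPf hm) orbF.
  by move/eqP: hy; rewrite mulf_eq0 (negPf hm) orbF.
have bp : 0 < b by rewrite lt_neqAle eq_sym bn0.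
have bl : b < 1 by rewrite lt_neqAle bn1.
move=> i j; case: (ord2_cases i) => ->; case: (ord2_cases j) => ->.
- rewrite e00; lra.
- done.
- rewrite sym; done.
- rewrite e11; lra.
Qed.
Lemma step_bound (R : realType) d (eps : R) (P0 c : Site d -> R) (U : {fset Site d})
  (Q0 Q1 : 'M[R]_2) (e : Omega d) (b : bool) (qm : R) :
  (forall u, 0 <= P0 u + eps * c u * spin (e 0)) ->
  \sum_(u <- U) (P0 u + eps * c u * spin (e 0)) = 1 ->
  c 0 = 0 -> (forall i j, Q0 i j <= qm) -> (forall i j, Q1 i j <= 1) -> qm <= 1 ->
  step_cyl eps P0 c U Q0 Q1 e [fset 0]%fset (fun _ => b) <= qm + (1 - qm) * P0 0.
Proof.
move=> w0 ws c0 Q0q Q1l qm1.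
rewrite /step_cyl.
under eq_bigr do rewrite big_seq_fset1 addr0.
set w := fun u => P0 u + eps * c u * spin (e 0).
apply: (@le_trans _ _ (\sum_(u <- U) (w u * qm + (if u == 0 then w u * (1 - qm) else 0)))).
  apply: ler_sum => u _; rewrite /Qat -/(w u).
  case: (eqVneq u 0) => hu.
    rewrite -mulrDr addrC subrK mulr1.
    by apply: ler_piMr; [exact: w0|exact: Q1l].
  by rewrite addr0 ler_wpM2l //; exact: w0.
rewrite big_split /= -big_distrl /= ws mul1r lerD2l -big_mkcond /=.
case: (boolP (0 \in U)) => h0.
  rewrite (fbig_pred1_inj (k := id)) //= /w c0 mulr0 mul0r addr0 mulrC //.
rewrite big_hasC; last first.
  apply/hasPn => u hu; apply/negP => /eqP hu0; by move: h0; rewrite -hu0 hu.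
have := w0 0; rewrite /w c0 mulr0 mul0r addr0 => hP.
by rewrite mulr_ge0 // subr_ge0.
Qed.

Theorem lemma2 (R : realType) (d : nat) (eps : R)
  (P0 c : Site d -> R) (U : {fset Site d}) (Q0 Q1 : 'M[R]_2) (mu M mubar : R)
  (K : R.-pker (Omega d) ~> (Omega d))
  (Pi0 Pi : probability (Omega d) R) (wp : probability OmegaP R) :
  (* the model *)
  (0 < d)%N ->
  0 < eps ->
  (* P0: even, finite-range probability distribution on Z^d *)
  (forall u, 0 <= P0 u) ->
  (forall u, u \notin U -> P0 u = 0) ->
  \sum_(u <- U) P0 u = 1 ->
  (forall u, P0 (- u) = P0 u) ->
  (* |p~0(lambda)| = 1 iff lambda = 0 (lambda in the torus (-pi,pi]^d) *)
  (forall l : 'rV[R]_d, (forall i, - pi < l ord0 i <= pi) ->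
     (`|ptilde0 U P0 l| = 1 <-> l = 0)) ->
  (* 1/p~0 has absolutely summable Fourier coefficients *)
  (exists a : Site d -> R,
     summable [set: Site d] (fun n => (a n)%:E) /\
     forall l : 'rV[R]_d,
       ptilde0 U P0 l * ssum (fun n => a n * cos (dotR l n)) = 1) ->
  (* c: odd, finite range, with P0(u) +- eps c(u) in [0,1) *)
  (forall u, c (- u) = - c u) ->
  (forall u, u \notin U -> c u = 0) ->
  (forall u, 0 <= P0 u + eps * c u < 1) ->
  (forall u, 0 <= P0 u - eps * c u < 1) ->
  (* Q0, Q1: symmetric 2x2 stochastic matrices *)
  (forall i j, 0 <= Q0 i j) -> (forall i, \sum_j Q0 i j = 1) -> Q0^T = Q0 ->
  (forall i j, 0 <= Q1 i j) -> (forall i, \sum_j Q1 i j = 1) -> Q1^T = Q1 ->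
  (* Q0 has eigenvalues 1 and mu, 0 < |mu| < 1 *)
  eigenvalue Q0 1 -> eigenvalue Q0 mu -> 0 < `|mu| < 1 ->
  (* K is the transition kernel of the environment seen from the walk *)
  (forall (e : Omega d) (L : {fset Site d}) (s : Site d -> bool),
     K e (cylinder L s) = (step_cyl eps P0 c U Q0 Q1 e L s)%:E) ->
  (* Pi0: product of uniform measures on {-1,+1} *)
  (forall (L : {fset Site d}) (s : Site d -> bool),
     Pi0 (cylinder L s) = ((2 : R) ^- #|` L|)%:E) ->
  (* standing assumptions *)
  1 < M ->
  0 < mubar < 1 ->
  (forall f, inHM Pi0 M f -> inHM Pi0 M (Top K f)) ->
  (forall A, measurable A -> (Pi A = \int[Pi]_e K e A)%E) ->
  (exists rho : Omega d -> R, exists C : R,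
     [/\ measurable_fun setT rho,
         (forall e, 0 <= rho e <= C) &
         forall A, measurable A -> (Pi A = \int[Pi0]_(e in A) (rho e)%:E)%E]) ->
  (forall f, inHM Pi0 M f -> (\int[Pi]_e (f e)%:E = 0)%E ->
     (normM Pi0 M (Top K f) <= mubar%:E * normM Pi0 M f)%E) ->
  (forall A, measurable A -> Pi (@flip d @^-1` A) = Pi A) ->
  (* wp is the law of (zeta_t) = (eta_t(0)) under P_Pi *)
  (forall (n : nat) (s : nat -> bool),
     wp [set z : OmegaP | forall k, (k <= n)%N -> z k = s k]
       = \int[Pi]_e fdd_fun K s n 0 e)%E ->
  (* hypothesis mu_* < 1 *)
  M * Num.sqrt (mubar * (1 + 2 * mubar)) < 1 ->
  forall z0 : OmegaP, wp [set z0] = 0%E.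
Proof.
move=> d0 eps0 P0ge0 P0U P0sum P0even ptil ainv codd cU cp cm Q0ge Q0s Q0T
  Q1ge Q1s Q1T eig1 eigmu hmu Kcyl Pi0cyl M1 hmubar Tinv Piinv rhoex contr
  flipinv wpdef mustar z0.
have c0 : c 0 = 0 by have := codd 0; rewrite oppr0; lra.
case/andP: hmu => _ hmu1.
have Q0lt := @Q_lt1 R Q0 mu Q0ge Q0s Q0T eigmu hmu1.
set qm := Num.max (Num.max (Q0 ord0 ord0) (Q0 ord0 ord_max))
                  (Num.max (Q0 ord_max ord0) (Q0 ord_max ord_max)).
have Q0q : forall i j, Q0 i j <= qm.
  move=> i j; rewrite /qm; case: (ord2_cases i) => ->; case: (ord2_cases j) => ->;
  by rewrite !le_max lexx ?orbT.
have qm1 : qm < 1 by rewrite /qm !gt_max !Q0lt.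
have qm0 : 0 <= qm by apply: le_trans (Q0ge ord0 ord0) (Q0q _ _).
have Q1l : forall i j, Q1 i j <= 1.
  move=> i j; rewrite -(Q1s i) sum2; case: (ord2_cases j) => ->;
  [rewrite lerDl | rewrite lerDr]; exact: Q1ge.
have P00 : P0 0 < 1 by have /andP[_] := cp 0; rewrite c0 mulr0 addr0.
set dl := qm + (1 - qm) * P0 0.
have dl0 : 0 <= dl by rewrite /dl addr_ge0 // mulr_ge0 // subr_ge0 ltW.
have dl1 : dl < 1 by rewrite /dl; have := P0ge0 0; nra.
have w0 : forall (e : Omega d) u, 0 <= P0 u + eps * c u * spin (e 0).
  move=> e u; rewrite /spin; case: (e 0); rewrite ?mulr1 ?mulrN1.
    by case/andP: (cp u).
  by case/andP: (cm u).
have ws : forall e : Omega d, \sum_(u <- U) (P0 u + eps * c u * spin (e 0)) = 1.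
  move=> e; have := Kcyl e fset0 (fun _ => true).
  have -> : cylinder fset0 (fun _ => true) = [set: Omega d].
    by apply/seteqP; split => x //= _ y; rewrite inE.
  rewrite prob_kernel /step_cyl => /(congr1 fine) /= h.
  rewrite h; apply: eq_bigr => u _; rewrite big_seq_fset0 mulr1 //.
pose A (b : bool) : set (Omega d) := [set e | e 0 = b].
have mA : forall b, measurable (A b).
  by move=> b; apply: sub_sigma_algebra; exists 0, b.
have KA : forall (e : Omega d) b, (K e (A b) <= dl%:E)%E.
  move=> e b.
  have -> : A b = cylinder [fset 0]%fset (fun _ => b).
    apply/seteqP; split => x /=.
      by move=> h y; rewrite inE => /eqP ->.
    by move=> h; apply: h; rewrite inE.
  rewrite Kcyl lee_fin; apply: step_bound => //.
  exact: ltW.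
have ind : forall (e : Omega d) b,
    ((e 0 == b)%:R)%:E = (\1_(A b) e)%:E :> \bar R.
  move=> e b; rewrite indicE; case: (eqVneq (e 0) b) => h.
    by rewrite mem_set.
  by rewrite memNset //; apply/eqP.
have mind : forall b, measurable_fun setT
    (fun e : Omega d => ((e 0 == b)%:R : R)%:E).
  move=> b; rewrite (_ : (fun e => _) = fun e => (\1_(A b) e)%:E); last first.
    by apply: funext => e; exact: ind.
  exact/measurable_EFinP/measurable_indic.
have fge0 : forall m k e, (0 <= fdd_fun K z0 m k e)%E.
  elim=> [|m IH] k e /=; first by rewrite lee_fin.
  by rewrite mule_ge0 // ?lee_fin // integral_ge0.
have fmeas : forall m k, measurable_fun setT (fdd_fun K z0 m k).
  elim=> [|m IH] k /=; first exact: mind.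
  apply: emeasurable_funM; first exact: mind.
  apply: (measurable_fun_integral_kernel (l := K)).
  - by move=> V mV; exact: measurable_kernel.
  - by move=> e; exact: fge0.
  - exact: IH.
have fbd : forall m k e,
    (fdd_fun K z0 m k e <= ((e 0 == z0 k)%:R * dl ^+ m)%:E)%E.
  elim=> [|m IH] k e /=; first by rewrite expr0 mulr1.
  rewrite EFinM; apply: lee_wpmul2l; first by rewrite lee_fin.
  apply: (@le_trans _ _ (\int[K e]_x ((dl ^+ m) * \1_(A (z0 k.+1)) x)%:E)%E).
    apply: (ge0_le_integral _ measurableT (fun x _ => fge0 _ _ x) (fmeas _ _)).
    - apply/measurable_EFinP; apply: measurable_funM => //.
    - move=> x _; apply: le_trans (IH _ x) _.
      by rewrite [X in (_ <= X)%E]EFinM -ind -EFinM mulrC.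
  rewrite (@integralZl_indic _ _ _ _ _ measurableT (fun _ => A (z0 k.+1)) (dl ^+ m)) //; last first.
    by move=> h; exfalso; move: h; rewrite ltNge exprn_ge0.
  rewrite integral_indic // setIT exprS mulrC EFinM.
  by apply: lee_wpmul2l; rewrite ?lee_fin ?exprn_ge0.
have mC : forall n : nat,
    measurable [set z : OmegaP | forall k, (k <= n)%N -> z k = z0 k].
  move=> n.
  have -> : [set z : OmegaP | forall k, (k <= n)%N -> z k = z0 k] =
      \bigcap_k [set z : OmegaP | (k <= n)%N -> z k = z0 k].
    by apply/seteqP; split => z /= h k; [move=> _; exact: h | exact: h k I].
  apply: bigcapT_measurable => k /=; case: (leqP k n) => hk.
    have -> : [set z : OmegaP | true -> z k = z0 k] =
        [set z | z k = z0 k].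
      by apply/seteqP; split => z /= h; [exact: h | move=> _].
    by apply: sub_sigma_algebra; exists k, (z0 k).
  have -> : [set z : OmegaP | false -> z k = z0 k] = setT.
    by apply/seteqP; split => z //= _.
  exact: measurableT.
have ms : measurable [set z0].
  have -> : [set z0] = \bigcap_k [set z : OmegaP | z k = z0 k].
    apply/seteqP; split => z /=; first by move=> -> k _.
    by move=> h; apply: funext => k; exact: h k I.
  by apply: bigcapT_measurable => k; apply: sub_sigma_algebra; exists k, (z0 k).
have bnd : forall n, (wp [set z0] <= (dl ^+ n)%:E)%E.
  move=> n.
  apply: (@le_trans _ _ (wp [set z : OmegaP | forall k, (k <= n)%N -> z k = z0 k])).
    by apply: le_measure; rewrite ?inE //; move=> z /= -> .
  rewrite wpdef.
  apply: (@le_trans _ _ (\int[Pi]_e (cst (dl ^+ n)%:E e))%E).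
    apply: (ge0_le_integral _ measurableT (fun x _ => fge0 _ _ x) (fmeas _ _)).
    - exact: measurable_cst.
    - move=> e _; apply: le_trans (fbd n 0%N e) _; rewrite lee_fin /=.
      by rewrite ler_piMl ?exprn_ge0 //; case: (_ == _).
  rewrite integral_cst //; set t := (X in (_ * X)%E).
  have -> : t = 1%E by exact: probability_setT.
  by rewrite mule1.
have x0 : (0 <= wp [set z0])%E := measure_ge0 _ _.
have xf : wp [set z0] \is a fin_num.
  by rewrite ge0_fin_numE // (le_lt_trans (bnd 0%N)) // ltry.
rewrite -(fineK xf); congr (_%:E).
apply/eqP; rewrite eq_le fine_ge0 // andbT; rewrite leNgt; apply/negP => hr.
have hdl : `|dl| < 1 by rewrite ger0_norm.
have /cvgrPdist_lt/(_ _ hr) := cvg_expr hdl.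
case=> N _ HN; have := HN N (leqnn N).
rewrite /= sub0r normrN ger0_norm ?exprn_ge0 // => h2.
have := bnd N; rewrite -(fineK xf) lee_fin => h1.
by move: (le_lt_trans h1 h2); rewrite ltxx.
Qed.
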